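(* Let $L\in\mathrm{Gr}(V,m)$ and let $A:V\to W$ be any linear map into a finite-dimensional real vector space $W$ with $\ker(A)=L$. Then $$\mathrm{Sym}\big(0,A(\{x\in K:\|x\|\le1\})\big)=\min_{v\in K,\ \|v\|=1}\ \max_{x\in K,\ t\in\mathbb R}\{t: x+tv\in L,\ \|x\|\le1\}.$$ In particular the left-hand side, denoted $\mathrm{Sym}(L)$, depends only on $L$, $K$ and $\|\cdot\|$, not on $A$.
   Context: $V$ is a finite-dimensional real vector space with inner product $\langle\cdot,\cdot\rangle$; $K\subseteq V$ a regular closed convex cone; $\|\cdot\|$ an arbitrary norm on $V$; $\mathrm{Gr}(V,m)$ the set of $m$-dimensional subspaces ($1\le m<\dim V$). For a set $S$ in a vector space with $0\in S$, $\mathrm{Sym}(0,S):=\max\{t\ge0: w\in S\Rightarrow -tw\in S\}$. *)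

(* Defs.v *)
From Stdlib Require Import Reals.
From Stdlib Require Vectors.Fin.
Open Scope R_scope.

(* The real vector space R^n, realised as functions Fin.t n -> R
   (with the standard inner product; every finite-dimensional real
   inner-product space is isometric to one of these). *)
Definition vec (n : nat) := Fin.t n -> R.

Definition vzero {n} : vec n := fun _ => 0.
Definition vadd {n} (x y : vec n) : vec n := fun i => x i + y i.
Definition vscale {n} (a : R) (x : vec n) : vec n := fun i => a * x i.

Definition linear_map {n p} (f : vec n -> vec p) : Prop :=
  (forall x y, f (vadd x y) = vadd (f x) (f y)) /\
  (forall a x, f (vscale a x) = vscale a (f x)).

Definition in_Grassmannian (n m : nat) (L : vec n -> Prop) : Prop :=
  exists f : vec m -> vec n,
    linear_map f /\
    (forall u w, f u = f w -> u = w) /\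
    (forall x, L x <-> exists u, f u = x).

Definition is_norm {n} (N : vec n -> R) : Prop :=
  (forall x, N x = 0 -> x = vzero) /\
  (forall a x, N (vscale a x) = Rabs a * N x) /\
  (forall x y, N (vadd x y) <= N x + N y).

(* Regular closed convex cone: a closed convex cone that is pointed
   (K ∩ -K = {0}) and has nonempty interior.  Topology = the (unique)
   Euclidean topology, expressed coordinatewise. *)
Definition is_cone {n} (K : vec n -> Prop) : Prop :=
  K vzero /\ forall a x, 0 <= a -> K x -> K (vscale a x).
Definition is_convex {n} (K : vec n -> Prop) : Prop :=
  forall x y t, K x -> K y -> 0 <= t <= 1 ->
    K (vadd (vscale t x) (vscale (1 - t) y)).
Definition is_closed {n} (K : vec n -> Prop) : Prop :=
  forall x, (forall eps, 0 < eps -> exists y, K y /\ forall i, Rabs (x i - y i) < eps) ->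
    K x.
Definition is_pointed {n} (K : vec n -> Prop) : Prop :=
  forall x, K x -> K (vscale (-1) x) -> x = vzero.
Definition has_nonempty_interior {n} (K : vec n -> Prop) : Prop :=
  exists x eps, 0 < eps /\ forall y, (forall i, Rabs (y i - x i) < eps) -> K y.
Definition regular_closed_convex_cone {n} (K : vec n -> Prop) : Prop :=
  is_cone K /\ is_convex K /\ is_closed K /\ is_pointed K /\ has_nonempty_interior K.

Definition is_max_of (P : R -> Prop) (s : R) : Prop :=
  P s /\ forall t, P t -> t <= s.
Definition is_min_of (P : R -> Prop) (s : R) : Prop :=
  P s /\ forall t, P t -> s <= t.

Definition sym_set {p} (S : vec p -> Prop) : R -> Prop :=
  fun t => 0 <= t /\ forall w, S w -> S (vscale (- t) w).
Definition Sym0 {p} (S : vec p -> Prop) (s : R) : Prop :=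
  is_max_of (sym_set S) s.

Definition image_ball {n p} (A : vec n -> vec p) (K : vec n -> Prop)
  (N : vec n -> R) : vec p -> Prop :=
  fun w => exists x, K x /\ N x <= 1 /\ A x = w.

Definition inner_set {n} (K L : vec n -> Prop) (N : vec n -> R) (v : vec n) : R -> Prop :=
  fun t => exists x, K x /\ N x <= 1 /\ L (vadd x (vscale t v)).

(* value of the inner max in the extended reals:
   Some t  = t is the maximum; None = the set is unbounded above (+oo). *)
Definition inner_max {n} (K L : vec n -> Prop) (N : vec n -> R) (v : vec n)
  (r : option R) : Prop :=
  match r with
  | Some t => is_max_of (inner_set K L N v) t
  | None => forall M, exists t, inner_set K L N v t /\ M < t
  end.

Definition minmax_value {n} (K L : vec n -> Prop) (N : vec n -> R) (s : R) : Prop :=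
  (exists v, K v /\ N v = 1 /\ inner_max K L N v (Some s)) /\
  (forall v, K v -> N v = 1 ->
     exists r, inner_max K L N v r /\
       match r with Some t => s <= t | None => True end).

(* Main.v *)
Require Import Defs.
From Stdlib Require Import Reals.
From Stdlib Require Vectors.Fin.
Open Scope R_scope.
From Stdlib Require Import Lra Lia FunctionalExtensionality Classical.
From Stdlib Require Import IndefiniteDescription Rtopology.

Lemma vec_ext {n} (x y : vec n) : (forall i, x i = y i) -> x = y.
Proof. intros; apply functional_extensionality; auto. Qed.

Lemma vec_S_ext {n} (x y : vec (S n)) :
  x Fin.F1 = y Fin.F1 -> (forall j, x (Fin.FS j) = y (Fin.FS j)) -> x = y.
Proof. intros H1 H2; apply vec_ext; intro i; apply (Fin.caseS' i); auto. Qed.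

Definition vcons {n} (a : R) (y : vec n) : vec (S n) :=
  fun i => Fin.caseS' i (fun _ => R) a y.

Lemma vec0_eq (x y : vec 0) : x = y.
Proof. apply vec_ext; intro i; apply (Fin.case0 (fun _ => _) i). Qed.

Fixpoint ninf (n : nat) : vec n -> R :=
  match n return vec n -> R with
  | O => fun _ => 0
  | S k => fun x => Rmax (Rabs (x Fin.F1)) (ninf k (fun i => x (Fin.FS i)))
  end.

Lemma ninf_ge {n} (i : Fin.t n) (x : vec n) : Rabs (x i) <= ninf n x.
Proof.
  induction i as [k|k i IH].
  - simpl; apply Rmax_l.
  - simpl. eapply Rle_trans; [apply (IH (fun j => x (Fin.FS j)))|apply Rmax_r].
Qed.

Lemma ninf_le {n} (x : vec n) M : 0 <= M -> (forall i, Rabs (x i) <= M) -> ninf n x <= M.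
Proof.
  induction n as [|n IH]; simpl; intros HM H; auto.
  apply Rmax_lub; auto.
Qed.

Lemma ninf_nonneg {n} (x : vec n) : 0 <= ninf n x.
Proof.
  induction n as [|n IH]; simpl. lra. eapply Rle_trans; [apply IH|apply Rmax_r].
Qed.

Lemma ninf_add {n} (x y : vec n) : ninf n (vadd x y) <= ninf n x + ninf n y.
Proof.
  apply ninf_le. pose proof (ninf_nonneg x); pose proof (ninf_nonneg y); lra.
  intro i; unfold vadd. eapply Rle_trans; [apply Rabs_triang|].
  pose proof (ninf_ge i x); pose proof (ninf_ge i y); lra.
Qed.

Lemma ninf_scale_le {n} a (x : vec n) : ninf n (vscale a x) <= Rabs a * ninf n x.
Proof.
  apply ninf_le. apply Rmult_le_pos; [apply Rabs_pos|apply ninf_nonneg].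
  intro i; unfold vscale; rewrite Rabs_mult.
  apply Rmult_le_compat_l; [apply Rabs_pos|apply ninf_ge].
Qed.

Lemma ninf_zero {n} (x : vec n) : ninf n x = 0 -> x = vzero.
Proof.
  intro H; apply vec_ext; intro i; pose proof (ninf_ge i x).
  pose proof (Rabs_pos (x i)). unfold vzero.
  destruct (Req_dec (x i) 0); auto. pose proof (Rabs_pos_lt _ H2). lra.
Qed.

Lemma ninf_vzero {n} : ninf n vzero = 0.
Proof.
  apply Rle_antisym; [apply ninf_le; [lra|]|apply ninf_nonneg].
  intro; unfold vzero; rewrite Rabs_R0; lra.
Qed.

Lemma seminorm_bound n (P : vec n -> R) :
  (forall x y, P (vadd x y) <= P x + P y) ->
  (forall a x, P (vscale a x) = Rabs a * P x) ->
  exists b, 0 <= b /\ forall x, P x <= b * ninf n x.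
Proof.
  revert P; induction n as [|n IH]; intros P Ht Hs.
  - exists 0; split; [lra|]. intro x. simpl.
    rewrite (vec0_eq x (vscale 0 x)), Hs, Rabs_R0; lra.
  - set (P' := fun y : vec n => P (vcons 0 y)).
    destruct (IH P') as [b [Hb Hb']].
    + intros x y; unfold P'. replace (vcons 0 (vadd x y)) with (vadd (vcons 0 x) (vcons 0 y)); auto.
      apply vec_S_ext; simpl; unfold vadd, vcons; simpl; intros; lra.
    + intros a x; unfold P'. rewrite <- Hs. f_equal.
      apply vec_S_ext; simpl; unfold vscale, vcons; simpl; intros; lra.
    + set (e := vcons 1 (@vzero n)).
      assert (Pnn : forall z, 0 <= P z).
      { intro z. assert (H0 : P (vscale 0 z) = 0) by (rewrite Hs, Rabs_R0; lra).
        assert (vscale 0 z = vadd z (vscale (-1) z)) by (apply vec_ext; intro; unfold vscale, vadd; ring).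
        pose proof (Ht z (vscale (-1) z)). rewrite <- H, H0, Hs in H1.
        rewrite Rabs_left in H1 by lra. lra. }
      exists (P e + b); split. pose proof (Pnn e); lra.
      intro x.
      assert (Hx : x = vadd (vscale (x Fin.F1) e) (vcons 0 (fun i => x (Fin.FS i)))).
      { apply vec_S_ext; unfold vadd, vscale, e, vcons, vzero; simpl; intros; ring. }
      rewrite Hx at 1. eapply Rle_trans; [apply Ht|]. rewrite Hs.
      pose proof (Hb' (fun i => x (Fin.FS i))). unfold P' in H.
      assert (H1 : Rabs (x Fin.F1) <= ninf (S n) x) by apply (ninf_ge Fin.F1 x).
      assert (H2 : ninf n (fun i => x (Fin.FS i)) <= ninf (S n) x) by (simpl; apply Rmax_r).
      pose proof (Pnn e).
      assert (Rabs (x Fin.F1) * P e <= ninf (S n) x * P e) by (apply Rmult_le_compat_r; auto).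
      assert (b * ninf n (fun i => x (Fin.FS i)) <= b * ninf (S n) x) by (apply Rmult_le_compat_l; auto).
      nra.
Qed.

Definition incr (phi : nat -> nat) := forall k, (phi k < phi (S k))%nat.

Lemma incr_mono phi : incr phi -> forall a b, (a < b)%nat -> (phi a < phi b)%nat.
Proof.
  intros H a b Hab; induction Hab. apply H. specialize (H m); lia.
Qed.

Lemma incr_ge phi : incr phi -> forall k, (k <= phi k)%nat.
Proof. intros H k; induction k. lia. specialize (H k); lia. Qed.

Lemma incr_comp f g : incr f -> incr g -> incr (fun k => f (g k)).
Proof. intros Hf Hg k. apply incr_mono; auto. Qed.

Lemma Un_cv_sub (u : nat -> R) l phi : incr phi -> Un_cv u l -> Un_cv (fun k => u (phi k)) l.
Proof.
  intros Hp H eps He. destruct (H eps He) as [N HN]. exists N; intros k Hk.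
  apply HN. pose proof (incr_ge phi Hp k); lia.
Qed.

Lemma inv_small eps : 0 < eps -> exists N : nat, forall k, (N <= k)%nat -> / (INR k + 1) < eps.
Proof.
  intros He. destruct (archimed_cor1 eps He) as [N [HN HN0]]. exists N; intros k Hk.
  eapply Rle_lt_trans; [|apply HN].
  apply Rinv_le_contravar. apply lt_0_INR; lia.
  apply le_INR in Hk. lra.
Qed.

Lemma inv_pos k : 0 < / (INR k + 1).
Proof. apply Rinv_0_lt_compat. pose proof (pos_INR k); lra. Qed.

Lemma BW1 (w : nat -> R) M : (forall k, Rabs (w k) <= M) ->
  exists phi, incr phi /\ exists l, Un_cv (fun k => w (phi k)) l.
Proof.
  intros Hb.
  destruct (Bolzano_Weierstrass w (fun c => -M <= c <= M) (compact_P3 (-M) M)) as [l Hl].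
  { intro k; specialize (Hb k); unfold Rabs in Hb; destruct (Rcase_abs (w k)); lra. }
  assert (Hc : forall N k : nat, exists p, (N <= p)%nat /\ Rabs (w p - l) < / (INR k + 1)).
  { intros N k. destruct (Hl (disc l (mkposreal _ (inv_pos k))) N) as [p [Hp1 Hp2]].
    - exists (mkposreal _ (inv_pos k)); intros y Hy; exact Hy.
    - exists p; split; auto. }
  assert (Hf : exists f : nat -> nat -> nat, forall N k, (N <= f N k)%nat /\ Rabs (w (f N k) - l) < / (INR k + 1)).
  { exists (fun N k => proj1_sig (constructive_indefinite_description _ (Hc N k))).
    intros N k; exact (proj2_sig (constructive_indefinite_description _ (Hc N k))). }
  destruct Hf as [f Hf].
  set (phi := fix phi k := match k with O => f O O | S k' => f (S (phi k')) (S k') end).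
  exists phi; split.
  - intro k; simpl. destruct (Hf (S (phi k)) (S k)); lia.
  - exists l. intros eps He. destruct (inv_small eps He) as [N HN]. exists N; intros k Hk.
    unfold Rdist. eapply Rlt_trans; [|apply (HN k Hk)].
    destruct k; simpl; apply Hf.
Qed.

Lemma all_eventually n (P : nat -> Fin.t n -> Prop) :
  (forall i, exists N, forall k, (N <= k)%nat -> P k i) ->
  exists N, forall k, (N <= k)%nat -> forall i, P k i.
Proof.
  revert P; induction n as [|n IH]; intros P H.
  - exists O; intros k _ i; apply (Fin.case0 (fun _ => _) i).
  - destruct (IH (fun k i => P k (Fin.FS i))) as [N1 HN1]. intro i; apply H.
    destruct (H Fin.F1) as [N0 HN0].
    exists (Nat.max N0 N1); intros k Hk i. apply (Fin.caseS' i).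
    apply HN0; lia. intro j; apply HN1; lia.
Qed.

Lemma BWn n (u : nat -> vec n) M : (forall k i, Rabs (u k i) <= M) ->
  exists phi, incr phi /\ exists l : vec n, forall i, Un_cv (fun k => u (phi k) i) (l i).
Proof.
  revert u; induction n as [|n IH]; intros u Hb.
  - exists (fun k => k); split. intro; lia. exists vzero; intro i; apply (Fin.case0 (fun _ => _) i).
  - destruct (BW1 (fun k => u k Fin.F1) M) as [p1 [Hp1 [l1 Hl1]]]. intro; apply Hb.
    destruct (IH (fun k j => u (p1 k) (Fin.FS j))) as [p2 [Hp2 [l2 Hl2]]]. intros; apply Hb.
    exists (fun k => p1 (p2 k)); split. apply incr_comp; auto.
    exists (vcons l1 l2). intro i. apply (Fin.caseS' i).
    + simpl. apply (Un_cv_sub (fun k => u (p1 k) Fin.F1)); auto.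
    + intro j. apply Hl2.
Qed.

Lemma BWc n (u : nat -> vec n) M : (forall k i, Rabs (u k i) <= M) ->
  exists l : vec n, forall eps, 0 < eps -> forall K0, exists k, (K0 <= k)%nat /\
     forall i, Rabs (u k i - l i) < eps.
Proof.
  intros Hb. destruct (BWn n u M Hb) as [phi [Hp [l Hl]]]. exists l.
  intros eps He K0.
  destruct (all_eventually n (fun k i => Rabs (u (phi k) i - l i) < eps)) as [N HN].
  { intro i. destruct (Hl i eps He) as [N HN]. exists N; intros; apply HN; auto. }
  exists (phi (Nat.max K0 N)); split.
  pose proof (incr_ge phi Hp (Nat.max K0 N)); lia.
  apply HN; lia.
Qed.

Lemma lin_zero {n p} (f : vec n -> vec p) : linear_map f -> f vzero = vzero.
Proof.
  intros [_ Hs]. replace (@vzero n) with (vscale 0 (@vzero n)) by (apply vec_ext; intro; unfold vscale, vzero; ring).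
  rewrite Hs. apply vec_ext; intro; unfold vscale, vzero; ring.
Qed.

Definition swap {n} (j : Fin.t (S n)) (k : Fin.t (S n)) : Fin.t (S n) :=
  if Fin.eq_dec k j then Fin.F1 else if Fin.eq_dec k Fin.F1 then j else k.

Lemma swap_inv {n} (j k : Fin.t (S n)) : swap j (swap j k) = k.
Proof.
  unfold swap. destruct (Fin.eq_dec k j) as [e|e].
  - destruct (Fin.eq_dec Fin.F1 j) as [e2|e2]. subst; auto.
    destruct (Fin.eq_dec (@Fin.F1 n) Fin.F1) as [e3|e3]; [subst; auto|congruence].
  - destruct (Fin.eq_dec k Fin.F1) as [e2|e2].
    + destruct (Fin.eq_dec j j); [subst; auto|congruence].
    + destruct (Fin.eq_dec k j); [congruence|]. destruct (Fin.eq_dec k Fin.F1); [congruence|auto].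
Qed.

Lemma swap_F1 {n} (j : Fin.t (S n)) : swap j Fin.F1 = j.
Proof.
  unfold swap. destruct (Fin.eq_dec Fin.F1 j); auto.
  destruct (Fin.eq_dec (@Fin.F1 n) Fin.F1); congruence.
Qed.

Lemma surj_dim m : forall n (f : vec m -> vec n), linear_map f ->
  (forall z, exists u, f u = z) -> (n <= m)%nat.
Proof.
  induction m as [|m IH]; intros n f Hf Hs.
  - destruct n as [|n]; [lia|]. exfalso.
    destruct (Hs (fun _ => 1)) as [u Hu].
    rewrite (vec0_eq u vzero), lin_zero in Hu by auto.
    assert (H := f_equal (fun g => g Fin.F1) Hu). unfold vzero in H; simpl in H; lra.
  - destruct n as [|n]; [lia|].
    destruct Hf as [Ha Hsc].
    set (w := f (vcons 1 vzero)).
    set (g := fun u : vec m => f (vcons 0 u)).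
    assert (Hg : linear_map g).
    { split; intros; unfold g.
      - rewrite <- Ha. f_equal. apply vec_S_ext; unfold vadd, vcons; simpl; intros; ring.
      - rewrite <- Hsc. f_equal. apply vec_S_ext; unfold vscale, vcons; simpl; intros; ring. }
    assert (Hdec : forall u : vec (S m), f u = vadd (vscale (u Fin.F1) w) (g (fun i => u (Fin.FS i)))).
    { intro u. unfold w, g. rewrite <- Hsc, <- Ha. f_equal.
      apply vec_S_ext; unfold vadd, vscale, vcons, vzero; simpl; intros; ring. }
    destruct (classic (exists j, w j <> 0)) as [[j Hj]|Hw].
    + set (pi := fun z : vec (S n) => fun i : Fin.t n =>
               z (swap j (Fin.FS i)) - (z (swap j Fin.F1) / w (swap j Fin.F1)) * w (swap j (Fin.FS i))).
      assert (Hpi : linear_map pi).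
      { split; intros; apply vec_ext; intro i; unfold pi, vadd, vscale; field; rewrite swap_F1; auto. }
      assert (Hpw : pi w = vzero).
      { apply vec_ext; intro i; unfold pi, vzero; field; rewrite swap_F1; auto. }
      assert (n <= m)%nat; [|lia].
      apply (IH n (fun u => pi (g u))).
      * destruct Hg as [Hg1 Hg2]; destruct Hpi as [Hp1 Hp2]; split; intros.
        rewrite Hg1, Hp1; auto. rewrite Hg2, Hp2; auto.
      * intro y. set (z := fun k => vcons 0 y (swap j k)).
        destruct (Hs z) as [u Hu]. exists (fun i => u (Fin.FS i)).
        assert (pi z = y).
        { apply vec_ext; intro i; unfold pi, z. rewrite !swap_inv. simpl. field. rewrite swap_F1; auto. }
        rewrite <- H, <- Hu, Hdec. destruct Hpi as [Hp1 Hp2]. rewrite Hp1, Hp2, Hpw.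
        apply vec_ext; intro; unfold vadd, vscale, vzero; ring.
    + assert (Hw0 : w = vzero).
      { apply vec_ext; intro j; unfold vzero; apply NNPP; intro; apply Hw; eauto. }
      assert (S n <= m)%nat; [|lia].
      apply (IH (S n) g Hg). intro z. destruct (Hs z) as [u Hu].
      exists (fun i => u (Fin.FS i)). rewrite <- Hu, Hdec, Hw0.
      apply vec_ext; intro; unfold vadd, vscale, vzero; ring.
Qed.

Definition vsub {n} (x y : vec n) : vec n := vadd x (vscale (-1) y).

Ltac vring := apply vec_ext; intro; unfold vsub, vadd, vscale, vzero; ring.

Lemma ninf_close {n} (x y : vec n) eps : 0 < eps -> (forall i, Rabs (x i - y i) < eps) ->
  ninf n (vsub x y) <= eps.
Proof.
  intros He H; apply ninf_le; [lra|]. intro i; unfold vsub, vadd, vscale.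
  replace (x i + -1 * y i) with (x i - y i) by ring. left; auto.
Qed.

Lemma norm_facts {n} (N : vec n -> R) : is_norm N ->
  N vzero = 0 /\ (forall x, 0 <= N x) /\ exists b, 0 <= b /\ forall x, N x <= b * ninf n x.
Proof.
  intros [H0 [Hs Ht]].
  assert (Z : N vzero = 0).
  { replace (@vzero n) with (vscale 0 (@vzero n)) by vring. rewrite Hs, Rabs_R0; ring. }
  split; auto. split.
  - intro x. pose proof (Ht x (vscale (-1) x)). rewrite Hs in H.
    replace (vadd x (vscale (-1) x)) with (@vzero n) in H by vring.
    rewrite Rabs_left in H by lra. lra.
  - apply seminorm_bound; auto.
Qed.

Lemma norm_lower n (N : vec n -> R) : is_norm N ->
  exists g, 0 < g /\ forall x, ninf n x <= g * N x.
Proof.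
  intros HN. destruct (norm_facts N HN) as [Z [Nn [b [Hb Hb']]]].
  destruct HN as [H0 [Hs Ht]].
  apply NNPP; intro Hc.
  assert (Hk : forall k : nat, exists x, ninf n x = 1 /\ N x < / (INR k + 1)).
  { intro k. apply NNPP; intro Hk. apply Hc. exists (INR k + 1). split.
    pose proof (pos_INR k); lra.
    intro x. destruct (Rle_dec (ninf n x) ((INR k + 1) * N x)) as [h|h]; auto. exfalso.
    apply Hk. pose proof (ninf_nonneg x).
    assert (Hp : 0 < ninf n x) by (pose proof (Nn x); pose proof (pos_INR k); nra).
    exists (vscale (/ ninf n x) x). split.
    - apply Rle_antisym.
      + eapply Rle_trans; [apply ninf_scale_le|]. rewrite Rabs_right.
        right; field; lra. left; apply Rinv_0_lt_compat; auto.
      + pose proof (ninf_scale_le (ninf n x) (vscale (/ ninf n x) x)) as G.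
        replace (vscale (ninf n x) (vscale (/ ninf n x) x)) with x in G.
        rewrite Rabs_right in G by lra.
        assert (G2 : 1 * ninf n x <= ninf n (vscale (/ ninf n x) x) * ninf n x) by lra.
        apply Rmult_le_reg_r in G2; auto.
        apply vec_ext; intro; unfold vscale; field; lra.
    - rewrite Hs, Rabs_right by (left; apply Rinv_0_lt_compat; auto).
      pose proof (pos_INR k).
      apply (Rmult_lt_reg_l (ninf n x)); auto.
      replace (ninf n x * (/ ninf n x * N x)) with (N x) by (field; lra).
      apply (Rmult_lt_reg_l (INR k + 1)); [lra|].
      replace ((INR k + 1) * (ninf n x * / (INR k + 1))) with (ninf n x) by (field; lra).
      lra. }
  assert (Hy : exists y : nat -> vec n, forall k, ninf n (y k) = 1 /\ N (y k) < / (INR k + 1)).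
  { exists (fun k => proj1_sig (constructive_indefinite_description _ (Hk k))).
    intro k; exact (proj2_sig (constructive_indefinite_description _ (Hk k))). }
  destruct Hy as [y Hy].
  destruct (BWc n y 1) as [l Hl].
  { intros k i. rewrite <- (proj1 (Hy k)). apply ninf_ge. }
  assert (Nl : N l <= 0).
  { apply Rle_plus_epsilon; intros e He.
    destruct (inv_small (e/2) ltac:(lra)) as [K0 HK0].
    destruct (Hl (e / (2 * (b + 1))) ltac:(apply Rdiv_lt_0_compat; lra) K0) as [k [Hk1 Hk2]].
    assert (E : l = vadd (y k) (vsub l (y k))) by vring.
    rewrite E. eapply Rle_trans; [apply Ht|].
    pose proof (proj2 (Hy k)). pose proof (HK0 k Hk1).
    pose proof (Hb' (vsub l (y k))).
    assert (ninf n (vsub l (y k)) <= e / (2 * (b + 1))).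
    { apply ninf_close. apply Rdiv_lt_0_compat; lra. intro i; rewrite Rabs_minus_sym; auto. }
    assert (b * ninf n (vsub l (y k)) <= b * (e / (2 * (b + 1)))) by (apply Rmult_le_compat_l; auto).
    assert (b * (e / (2 * (b + 1))) <= e / 2).
    { unfold Rdiv. rewrite Rinv_mult. 
      assert (0 < / (b+1) <= 1). { split. apply Rinv_0_lt_compat; lra.
        rewrite <- Rinv_1. apply Rinv_le_contravar; lra. }
      assert (b * / (b+1) <= 1).
      { apply (Rmult_le_reg_r (b+1)); [lra|]. rewrite Rmult_assoc, Rinv_l by lra. lra. }
      nra. }
    lra. }
  assert (l = vzero) by (apply H0; pose proof (Nn l); lra).
  destruct (Hl (1/2) ltac:(lra) O) as [k [_ Hk2]].
  assert (ninf n (y k) <= 1/2).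
  { apply ninf_le; [lra|]. intro i; specialize (Hk2 i). rewrite H in Hk2; unfold vzero in Hk2.
    rewrite Rminus_0_r in Hk2; lra. }
  rewrite (proj1 (Hy k)) in H1; lra.
Qed.

Lemma Rdiv_le_0_compat a b : 0 <= a -> 0 < b -> 0 <= a / b.
Proof. intros; unfold Rdiv; apply Rmult_le_pos; [auto|left; apply Rinv_0_lt_compat; auto]. Qed.

Lemma L_facts {n p} (A : vec n -> vec p) (L : vec n -> Prop) : linear_map A ->
  (forall x, A x = vzero <-> L x) ->
  L vzero /\ (forall x y, L x -> L y -> L (vadd x y)) /\ (forall a x, L x -> L (vscale a x)).
Proof.
  intros HA Hk. pose proof (lin_zero A HA) as Z. destruct HA as [Ha Hs].
  split; [apply Hk; auto|split].
  - intros x y Hx Hy; apply Hk; apply Hk in Hx; apply Hk in Hy. rewrite Ha, Hx, Hy; vring.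
  - intros a x Hx; apply Hk; apply Hk in Hx. rewrite Hs, Hx; vring.
Qed.

Lemma A_bound {n p} (A : vec n -> vec p) : linear_map A ->
  exists b, 0 <= b /\ forall x, ninf p (A x) <= b * ninf n x.
Proof.
  intros [Ha Hs]. apply seminorm_bound.
  - intros; rewrite Ha; apply ninf_add.
  - intros; rewrite Hs. apply Rle_antisym; [apply ninf_scale_le|].
    destruct (Req_dec a 0) as [e|e].
    + subst; rewrite Rabs_R0, Rmult_0_l; apply ninf_nonneg.
    + pose proof (ninf_scale_le (/a) (vscale a (A x))).
      replace (vscale (/ a) (vscale a (A x))) with (A x) in H by (apply vec_ext; intro; unfold vscale; field; auto).
      rewrite Rabs_inv in H. pose proof (Rabs_pos_lt _ e).
      apply (Rmult_le_compat_l (Rabs a)) in H; [|lra].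
      rewrite <- Rmult_assoc, Rinv_r in H by lra. lra.
Qed.

Lemma T0 {n} K N L (v : vec n) : K vzero -> N vzero = 0 -> L vzero -> inner_set K L N v 0.
Proof.
  intros; exists vzero; split; auto; split; [lra|].
  replace (vadd vzero (vscale 0 v)) with (@vzero n) by vring; auto.
Qed.

Lemma Tdown {n} K N L (v : vec n) t t' : is_cone K -> is_norm N ->
  (forall a x, L x -> L (vscale a x)) ->
  inner_set K L N v t -> 0 <= t' <= t -> inner_set K L N v t'.
Proof.
  intros [K0 Kc] HN Ls [x [Kx [Nx Lx]]] Ht.
  destruct (norm_facts N HN) as [Z [Nn _]].
  destruct (Req_dec t' 0) as [e|e].
  - subst. apply T0; auto. replace (@vzero n) with (vscale 0 (vadd x (vscale t v))) by vring. auto.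
  - exists (vscale (t'/t) x). split; [apply Kc; auto; apply Rdiv_le_0_compat; lra|]. split.
    + destruct HN as [_ [Hs _]]. rewrite Hs, Rabs_right.
      assert (t' / t <= 1) by (apply (Rmult_le_reg_r t); [lra|]; unfold Rdiv; rewrite Rmult_assoc, Rinv_l; lra).
      assert (0 <= t'/t) by (apply Rdiv_le_0_compat; lra). nra.
      apply Rle_ge, Rdiv_le_0_compat; lra.
    + replace (vadd (vscale (t' / t) x) (vscale t' v)) with (vscale (t'/t) (vadd x (vscale t v))).
      auto. apply vec_ext; intro; unfold vadd, vscale; field; lra.
Qed.

Lemma A_sol {n p} (A : vec n -> vec p) (L : vec n -> Prop) x t v : linear_map A ->
  (forall x, A x = vzero <-> L x) -> L (vadd x (vscale t v)) -> forall j, A x j = - t * A v j.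
Proof.
  intros [Ha Hs] Hk Hl j. apply Hk in Hl. rewrite Ha, Hs in Hl.
  apply (f_equal (fun f => f j)) in Hl. unfold vadd, vscale, vzero in Hl. lra.
Qed.

Lemma Tbound {n p} K N L (A : vec n -> vec p) v : is_norm N -> linear_map A ->
  (forall x, A x = vzero <-> L x) -> ~ L v ->
  exists B, forall t, inner_set K L N v t -> t <= B.
Proof.
  intros HN HA Hk Hv.
  destruct (norm_lower n N HN) as [g [Hg Hg']].
  destruct (A_bound A HA) as [b [Hb Hb']].
  assert (exists j, A v j <> 0) as [j Hj].
  { apply NNPP; intro H. apply Hv, Hk. apply vec_ext; intro j; unfold vzero.
    apply NNPP; intro; apply H; eauto. }
  pose proof (Rabs_pos_lt _ Hj).
  exists (b * g / Rabs (A v j)). intros t [x [Kx [Nx Lx]]].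
  pose proof (A_sol A L x t v HA Hk Lx j).
  pose proof (ninf_ge j (A x)). rewrite H0, Rabs_mult, Rabs_Ropp in H1.
  pose proof (Hb' x). pose proof (Hg' x).
  assert (Rabs t * Rabs (A v j) <= b * g).
  { eapply Rle_trans; [apply H1|]. eapply Rle_trans; [apply H2|].
    apply Rmult_le_compat_l; auto. nra. }
  apply (Rmult_le_reg_r (Rabs (A v j))); auto.
  unfold Rdiv; rewrite Rmult_assoc, Rinv_l by lra.
  pose proof (Rle_abs t). nra.
Qed.

Lemma bdiv b e : 0 <= b -> 0 < e -> b * (e / (b + 1)) <= e.
Proof.
  intros Hb He. apply (Rmult_le_reg_r (b+1)); [lra|].
  unfold Rdiv. replace (b * (e * / (b + 1)) * (b + 1)) with (b * e) by (field; lra). nra.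
Qed.

Lemma N_close {n} (N : vec n -> R) b : is_norm N -> (forall x, N x <= b * ninf n x) ->
  forall x y, N x <= N y + b * ninf n (vsub x y).
Proof.
  intros [_ [_ Ht]] Hb x y.
  replace x with (vadd y (vsub x y)) at 1 by vring.
  eapply Rle_trans; [apply Ht|]. specialize (Hb (vsub x y)); lra.
Qed.

Lemma Tclosed {n p} K N L (A : vec n -> vec p) v t : is_closed K -> K vzero -> is_norm N ->
  linear_map A -> (forall x, A x = vzero <-> L x) -> 0 <= t ->
  (forall t', 0 <= t' < t -> inner_set K L N v t') -> inner_set K L N v t.
Proof.
  intros Kcl K0 HN HA Hk Ht Hs.
  destruct (L_facts A L HA Hk) as [L0 [La Ls]].
  destruct (norm_facts N HN) as [Z [Nn [b [Hb Hb']]]].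
  destruct (Req_dec t 0) as [e|e]. { subst; apply T0; auto. }
  destruct (norm_lower n N HN) as [g [Hg Hg']].
  destruct (A_bound A HA) as [bA [HbA HbA']].
  set (tk := fun k : nat => t - t * / (INR k + 2)).
  assert (Hik : forall k, 0 < / (INR k + 2) <= / (INR k + 1) /\ / (INR k + 2) <= /2).
  { intro k; pose proof (pos_INR k). split; [split|].
    apply Rinv_0_lt_compat; lra. apply Rinv_le_contravar; lra. apply Rinv_le_contravar; lra. }
  assert (Hx : forall k, exists x, K x /\ N x <= 1 /\ L (vadd x (vscale (tk k) v))).
  { intro k; apply Hs. unfold tk; destruct (Hik k) as [[? ?] ?]. split; nra. }
  assert (Hxs : exists xs : nat -> vec n, forall k, K (xs k) /\ N (xs k) <= 1 /\ L (vadd (xs k) (vscale (tk k) v))).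
  { exists (fun k => proj1_sig (constructive_indefinite_description _ (Hx k))).
    intro k; exact (proj2_sig (constructive_indefinite_description _ (Hx k))). }
  destruct Hxs as [xs Hxs].
  destruct (BWc n xs g) as [l Hl].
  { intros k i. eapply Rle_trans; [apply ninf_ge|]. eapply Rle_trans; [apply Hg'|].
    destruct (Hxs k) as [_ [? _]]. pose proof (Nn (xs k)). nra. }
  exists l; split; [|split].
  - apply Kcl; intros eps He. destruct (Hl eps He O) as [k [_ Hk2]].
    exists (xs k); split; [apply Hxs|]. intro i; rewrite Rabs_minus_sym; auto.
  - apply Rle_plus_epsilon; intros e0 He0.
    destruct (Hl (e0 / (b+1)) ltac:(apply Rdiv_lt_0_compat; lra) O) as [k [_ Hk2]].
    pose proof (N_close N b HN Hb' l (xs k)).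
    pose proof (ninf_close l (xs k) (e0/(b+1)) ltac:(apply Rdiv_lt_0_compat; lra) ltac:(intro i; rewrite Rabs_minus_sym; apply Hk2)).
    pose proof (bdiv b e0 Hb He0). destruct (Hxs k) as [_ [? _]].
    assert (b * ninf n (vsub l (xs k)) <= b * (e0 / (b+1))) by (apply Rmult_le_compat_l; auto).
    lra.
  - apply Hk. apply ninf_zero. apply Rle_antisym; [|apply ninf_nonneg].
    apply Rle_plus_epsilon; intros e0 He0.
    set (c := ninf p (A v)). assert (Hc : 0 <= c) by apply ninf_nonneg.
    destruct (inv_small ((e0/2) / (t*c+1)) ltac:(apply Rdiv_lt_0_compat; nra)) as [K1 HK1].
    destruct (Hl ((e0/2) / (bA+1)) ltac:(apply Rdiv_lt_0_compat; lra) K1) as [k [Hk1 Hk2]].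
    assert (E : vadd l (vscale t v) = vadd (vsub l (xs k)) (vadd (vadd (xs k) (vscale (tk k) v)) (vscale (t * / (INR k + 2)) v))).
    { apply vec_ext; intro; unfold tk, vsub, vadd, vscale; ring. }
    rewrite E. destruct HA as [Ha Has].
    destruct (Hxs k) as [_ [_ Lk]]. apply Hk in Lk.
    rewrite Ha, (Ha (vadd (xs k) (vscale (tk k) v))), Lk, Has.
    eapply Rle_trans; [apply ninf_add|]. eapply Rle_trans; [apply Rplus_le_compat_l, ninf_add|].
    rewrite ninf_vzero.
    pose proof (ninf_scale_le (t * / (INR k + 2)) (A v)). fold c in H.
    pose proof (HbA' (vsub l (xs k))).
    pose proof (ninf_close l (xs k) ((e0/2) / (bA+1)) ltac:(apply Rdiv_lt_0_compat; lra) ltac:(intro i; rewrite Rabs_minus_sym; apply Hk2)).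
    assert (bA * ninf n (vsub l (xs k)) <= bA * ((e0/2) / (bA+1))) by (apply Rmult_le_compat_l; auto).
    pose proof (bdiv bA (e0/2) HbA ltac:(lra)).
    pose proof (bdiv (t*c) (e0/2) ltac:(nra) ltac:(lra)).
    pose proof (HK1 k Hk1). destruct (Hik k) as [[? ?] _].
    rewrite Rabs_right in H by nra.
    assert (t * / (INR k + 2) * c <= t * c * (e0 / 2 / (t * c + 1))).
    { replace (t * / (INR k + 2) * c) with (t * c * / (INR k + 2)) by ring.
      apply Rmult_le_compat_l; nra. }
    lra.
Qed.

Lemma max_exists (E : R -> Prop) : E 0 -> (exists B, forall t, E t -> t <= B) ->
  (forall t, 0 <= t -> (forall t', 0 <= t' < t -> E t') -> E t) ->
  (forall t t', E t -> 0 <= t' <= t -> E t') -> exists s, 0 <= s /\ is_max_of E s.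
Proof.
  intros E0 [B HB] Hc Hd.
  destruct (completeness E) as [m [Hm1 Hm2]]. exists B; exact HB. exists 0; auto.
  assert (Hm0 : 0 <= m) by (apply Hm1; auto).
  exists m; split; auto; split; auto.
  apply Hc; auto. intros t' Ht'.
  destruct (classic (exists t'', E t'' /\ t' < t'')) as [[t'' [H1 H2]]|Hn].
  - apply (Hd t''); auto; lra.
  - exfalso. assert (m <= t'); [|lra]. apply Hm2. intros x Hx.
    apply Rnot_lt_le; intro; apply Hn; eauto.
Qed.

Lemma normalize {n} K N L (y : vec n) : is_cone K -> is_norm N -> K y -> y <> vzero ->
  K (vscale (/ N y) y) /\ N (vscale (/ N y) y) = 1 /\ 0 < N y /\
  forall t, inner_set K L N (vscale (/ N y) y) t <-> inner_set K L N y (t / N y).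
Proof.
  intros [K0 Kc] HN Ky Hy. destruct (norm_facts N HN) as [Z [Nn _]].
  assert (Hp : 0 < N y). { destruct (Nn y); auto. exfalso; apply Hy, HN; auto. }
  split; [apply Kc; auto; left; apply Rinv_0_lt_compat; auto|]. split.
  { destruct HN as [_ [Hs _]]. rewrite Hs, Rabs_right. field; lra. left; apply Rinv_0_lt_compat; auto. }
  split; auto.
  intro t. unfold inner_set.
  replace (vscale t (vscale (/ N y) y)) with (vscale (t / N y) y). tauto.
  apply vec_ext; intro; unfold vscale, Rdiv; ring.
Qed.

Lemma SymChar {n p} K N L (A : vec n -> vec p) : linear_map A ->
  (forall x, A x = vzero <-> L x) ->
  forall t, sym_set (image_ball A K N) t <-> 0 <= t /\ forall y, K y -> N y <= 1 -> inner_set K L N y t.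
Proof.
  intros HA Hk t; split.
  - intros [Ht H]; split; auto; intros y Ky Ny.
    destruct (H (A y) (ex_intro _ y (conj Ky (conj Ny eq_refl)))) as [x [Kx [Nx Ax]]].
    exists x; repeat split; auto. apply Hk. destruct HA as [Ha Hs]. rewrite Ha, Hs, Ax. vring.
  - intros [Ht H]; split; auto. intros w [y [Ky [Ny Ay]]]. subst w.
    destruct (H y Ky Ny) as [x [Kx [Nx Lx]]]. exists x; split; auto; split; auto.
    apply vec_ext; intro j. rewrite (A_sol A L x t y HA Hk Lx j). unfold vscale; ring.
Qed.

Theorem mainTheorem10
  (n m p : nat) (Hm1 : (1 <= m)%nat) (Hmn : (m < n)%nat)
  (K : vec n -> Prop) (HK : regular_closed_convex_cone K)
  (N : vec n -> R) (HN : is_norm N)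
  (L : vec n -> Prop) (HL : in_Grassmannian n m L)
  (A : vec n -> vec p) (HA : linear_map A)
  (Hker : forall x, A x = vzero <-> L x) :
  exists s, Sym0 (image_ball A K N) s /\ minmax_value K L N s.
Proof.
  pose proof HK as [Kcone [Kconv [Kcl [Kpt [a [r [Hr Hball]]]]]]].
  pose proof Kcone as [K0 Kc].
  destruct (L_facts A L HA Hker) as [L0 [La Ls]].
  destruct (norm_facts N HN) as [Z [Nn [b [Hb Hb']]]].
  pose proof HN as [N0 [Ns Nt]].
  destruct (norm_lower n N HN) as [g [Hg Hg']].
  assert (Kadd : forall x y, K x -> K y -> K (vadd x y)).
  { intros x y Kx Ky.
    replace (vadd x y) with (vscale 2 (vadd (vscale (1/2) x) (vscale (1 - 1/2) y)))
      by (apply vec_ext; intro; unfold vadd, vscale; field).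
    apply Kc; [lra|]. apply Kconv; auto; lra. }
  assert (HnL : exists z, ~ L z).
  { apply NNPP; intro H. destruct HL as [f [Hf [_ Hfl]]].
    assert (n <= m)%nat; [|lia]. apply (surj_dim m n f Hf). intro z. apply Hfl.
    apply NNPP; intro; apply H; eauto. }
  destruct HnL as [z Hz].
  assert (Ka : K a). { apply Hball; intro; replace (a i - a i) with 0 by ring; rewrite Rabs_R0; lra. }
  assert (Hy0 : exists y, K y /\ ~ L y).
  { destruct (classic (L a)) as [La'|na]; [|exists a; split; auto].
    pose proof (ninf_nonneg z).
    set (eps := r / (2 * (ninf n z + 1))).
    assert (He : 0 < eps) by (apply Rdiv_lt_0_compat; lra).
    exists (vadd a (vscale eps z)). split.
    - apply Hball; intro i. replace (vadd a (vscale eps z) i - a i) with (eps * z i) by (unfold vadd, vscale; ring).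
      rewrite Rabs_mult, (Rabs_right eps) by lra. pose proof (ninf_ge i z).
      assert (eps * (ninf n z + 1) = r / 2) by (unfold eps; field; lra).
      nra.
    - intro H'. apply Hz.
      replace z with (vscale (/eps) (vadd (vadd a (vscale eps z)) (vscale (-1) a)))
        by (apply vec_ext; intro; unfold vadd, vscale; field; lra).
      apply Ls, La; auto. }
  destruct Hy0 as [y0 [Ky0 Hy0]].
  assert (Hy0z : y0 <> vzero) by (intro; subst; auto).
  destruct (normalize K N L y0 Kcone HN Ky0 Hy0z) as [Kv0 [Nv0 [Npos0 _]]].
  assert (nLv0 : ~ L (vscale (/ N y0) y0)).
  { intro H'. apply Hy0. replace y0 with (vscale (N y0) (vscale (/ N y0) y0)); auto.
    apply vec_ext; intro; unfold vscale; field; lra. }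
  assert (Hs : exists s, 0 <= s /\ is_max_of (sym_set (image_ball A K N)) s).
  { apply max_exists.
    - apply (SymChar K N L A HA Hker). split; [lra|]; intros; apply T0; auto.
    - destruct (Tbound K N L A _ HN HA Hker nLv0) as [B HB]. exists B. intros t Ht.
      apply (SymChar K N L A HA Hker) in Ht. apply HB, Ht; auto; lra.
    - intros t Ht H'. apply (SymChar K N L A HA Hker). split; auto. intros y Ky Ny.
      apply (Tclosed K N L A); auto. intros t' Ht'.
      apply (proj1 (SymChar K N L A HA Hker t') (H' t' Ht')); auto.
    - intros t t' Ht Ht'. apply (SymChar K N L A HA Hker) in Ht.
      apply (SymChar K N L A HA Hker). split; [lra|]. intros y Ky Ny.
      apply (Tdown K N L y t t'); auto. apply Ht; auto. }
  destruct Hs as [s [Hs0 Hsmax]].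
  assert (Hsall : forall y, K y -> N y <= 1 -> inner_set K L N y s).
  { intros y Ky Ny; apply (proj1 (SymChar K N L A HA Hker s) (proj1 Hsmax)); auto. }
  exists s; split; [exact Hsmax|].
  split.
  2: {
    intros v Kv Nv. destruct (classic (L v)) as [Lv|nLv].
    - exists None. split; [|exact I]. simpl. intro M. exists (M+1). split; [|lra]. exists vzero.
      split; auto. split; [lra|].
      replace (vadd vzero (vscale (M+1) v)) with (vscale (M+1) v) by vring. auto.
    - destruct (max_exists (inner_set K L N v)) as [gv [Hgv0 Hgv]].
      + apply T0; auto.
      + apply (Tbound K N L A v HN HA Hker nLv).
      + intros; apply (Tclosed K N L A); auto.
      + intros; eapply Tdown; eauto.
      + exists (Some gv). split; [exact Hgv|]. apply Hgv. apply Hsall; auto; lra. }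
  destruct (classic (exists y, K y /\ ~ exists x, K x /\ L (vadd x y))) as [[y [Ky Hny]]|HB].
  - assert (Hyz : y <> vzero).
    { intro; subst. apply Hny. exists vzero; split; auto. }
    destruct (normalize K N L y Kcone HN Ky Hyz) as [Kv [Nv [Npos Hiff]]].
    exists (vscale (/ N y) y). split; auto; split; auto. simpl. split.
    + apply Hsall; auto; lra.
    + intros t Ht. destruct (Rle_dec t 0) as [h|h]; [lra|]. exfalso.
      apply Hiff in Ht. destruct Ht as [x [Kx [Nx Lx]]].
      apply Hny. exists (vscale (N y / t) x). split.
      { apply Kc; auto. left; apply Rdiv_lt_0_compat; lra. }
      replace (vadd (vscale (N y / t) x) y) with (vscale (N y / t) (vadd x (vscale (t / N y) y))).
      apply Ls; auto. apply vec_ext; intro; unfold vadd, vscale; field; split; lra.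
  - assert (HB' : forall y, K y -> exists x, K x /\ L (vadd x y)).
    { intros y Ky. apply NNPP; intro H'. apply HB; eauto. }
    destruct (HB' a Ka) as [k0 [Kk0 Lk0]].
    set (M := N a + b * r + N k0 + 1).
    assert (HM : 0 < M) by (pose proof (Nn a); pose proof (Nn k0); unfold M; nra).
    set (rho := r / (2 * M)).
    assert (Hrho : 0 < rho) by (apply Rdiv_lt_0_compat; lra).
    assert (Hball' : forall z0, ninf n z0 <= rho -> exists c, K c /\ N c <= 1 /\ L (vadd c (vscale (-1) z0))).
    { intros z0 Hz0. set (z' := vscale M z0).
      assert (Hz' : ninf n z' <= r / 2).
      { eapply Rle_trans; [apply ninf_scale_le|]. rewrite Rabs_right by lra.
        replace (r/2) with (M * rho) by (unfold rho; field; lra).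
        apply Rmult_le_compat_l; lra. }
      assert (Kaz : K (vadd a z')).
      { apply Hball; intro i. replace (vadd a z' i - a i) with (z' i) by (unfold vadd; ring).
        pose proof (ninf_ge i z'); lra. }
      set (c0 := vadd (vadd a z') k0).
      exists (vscale (/ M) c0). split; [apply Kc; [left; apply Rinv_0_lt_compat; auto|apply Kadd; auto]|].
      split.
      - rewrite Ns, Rabs_right by (left; apply Rinv_0_lt_compat; auto).
        assert (N c0 <= M).
        { unfold c0. eapply Rle_trans; [apply Nt|]. eapply Rle_trans; [apply Rplus_le_compat_r, Nt|].
          pose proof (Hb' z'). pose proof (ninf_nonneg z').
          assert (b * ninf n z' <= b * r) by (apply Rmult_le_compat_l; lra).
          unfold M; lra. }
        apply (Rmult_le_reg_l M); auto. rewrite <- Rmult_assoc, Rinv_r by lra. lra.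
      - replace (vadd (vscale (/ M) c0) (vscale (-1) z0)) with (vscale (/M) (vadd k0 a)).
        apply Ls; auto.
        apply vec_ext; intro; unfold c0, z', vadd, vscale; field; lra. }
    assert (Hseq : forall k : nat, exists v, K v /\ N v = 1 /\
               forall u, inner_set K L N v u -> u < s + / (INR k + 1)).
    { intro k. set (e := / (INR k + 1)). assert (He : 0 < e) by apply inv_pos.
      assert (Hns : ~ sym_set (image_ball A K N) (s + e)).
      { intro H'. apply Hsmax in H'. lra. }
      assert (Hex : exists y, K y /\ N y <= 1 /\ ~ inner_set K L N y (s+e)).
      { apply NNPP; intro H'. apply Hns. apply (SymChar K N L A HA Hker). split; [lra|].
        intros y Ky Ny. apply NNPP; intro; apply H'; eauto. }
      destruct Hex as [y [Ky [Ny Hny]]].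
      assert (Hyz : y <> vzero).
      { intro; subst. apply Hny. exists vzero. split; [auto|split; [lra|auto]]. }
      destruct (normalize K N L y Kcone HN Ky Hyz) as [Kv [Nv [Npos Hiff]]].
      exists (vscale (/ N y) y). split; auto; split; auto. intros u Hu.
      apply Rnot_le_lt; intro Hle. apply Hny. apply Hiff in Hu.
      apply (Tdown K N L y (u / N y) (s+e)); auto. split; [lra|].
      apply (Rmult_le_reg_r (N y)); auto. unfold Rdiv; rewrite Rmult_assoc, Rinv_l by lra.
      nra. }
    assert (Hvs : exists vs : nat -> vec n, forall k, K (vs k) /\ N (vs k) = 1 /\
               forall u, inner_set K L N (vs k) u -> u < s + / (INR k + 1)).
    { exists (fun k => proj1_sig (constructive_indefinite_description _ (Hseq k))).
      intro k; exact (proj2_sig (constructive_indefinite_description _ (Hseq k))). }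
    destruct Hvs as [vs Hvs].
    destruct (BWc n vs g) as [l Hl].
    { intros k i. eapply Rle_trans; [apply ninf_ge|]. eapply Rle_trans; [apply Hg'|].
      destruct (Hvs k) as [_ [-> _]]. lra. }
    assert (Kl : K l).
    { apply Kcl; intros eps He. destruct (Hl eps He O) as [k [_ Hk2]].
      exists (vs k); split; [apply Hvs|]. intro i; rewrite Rabs_minus_sym; auto. }
    assert (Nl : N l = 1).
    { apply Rle_antisym; apply Rle_plus_epsilon; intros e0 He0;
      destruct (Hl (e0 / (b+1)) ltac:(apply Rdiv_lt_0_compat; lra) O) as [k [_ Hk2]];
      pose proof (bdiv b e0 Hb He0); destruct (Hvs k) as [_ [Nk _]].
      - pose proof (N_close N b HN Hb' l (vs k)).
        pose proof (ninf_close l (vs k) (e0/(b+1)) ltac:(apply Rdiv_lt_0_compat; lra)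
                     ltac:(intro i; rewrite Rabs_minus_sym; apply Hk2)).
        assert (b * ninf n (vsub l (vs k)) <= b * (e0 / (b+1))) by (apply Rmult_le_compat_l; auto).
        lra.
      - pose proof (N_close N b HN Hb' (vs k) l).
        pose proof (ninf_close (vs k) l (e0/(b+1)) ltac:(apply Rdiv_lt_0_compat; lra) Hk2).
        assert (b * ninf n (vsub (vs k) l) <= b * (e0 / (b+1))) by (apply Rmult_le_compat_l; auto).
        lra. }
    exists l. split; auto; split; auto. simpl; split.
    + apply Hsall; auto; lra.
    + intros t Ht. apply Rnot_lt_le; intro Hts.
      destruct Ht as [x [Kx [Nx Lx]]].
      set (lam := (s + t) / (2 * t)).
      assert (Hlam : 0 < lam < 1 /\ lam * t = (s + t) / 2).
      { unfold lam. split; [split|].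
        apply Rdiv_lt_0_compat; lra.
        apply (Rmult_lt_reg_r (2 * t)); [lra|]. unfold Rdiv; rewrite Rmult_assoc, Rinv_l by lra. lra.
        field; lra. }
      destruct Hlam as [[Hl0 Hl1] Hlt].
      set (cc := lam * t / (1 - lam)).
      assert (Hcc : 0 < cc) by (apply Rdiv_lt_0_compat; nra).
      set (eps := rho / (cc + 1)).
      assert (Heps : 0 < eps) by (apply Rdiv_lt_0_compat; lra).
      destruct (inv_small ((t - s) / 2) ltac:(lra)) as [K1 HK1].
      destruct (Hl eps Heps K1) as [k [Hk1 Hk2]].
      set (z0 := vscale (- cc) (vsub (vs k) l)).
      assert (Hz0 : ninf n z0 <= rho).
      { unfold z0. eapply Rle_trans; [apply ninf_scale_le|].
        rewrite Rabs_left by lra.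
        pose proof (ninf_close (vs k) l eps Heps Hk2).
        pose proof (bdiv cc rho ltac:(lra) Hrho). fold eps in H0.
        assert (- - cc * ninf n (vsub (vs k) l) <= cc * eps) by (rewrite Ropp_involutive; apply Rmult_le_compat_l; lra).
        lra. }
      destruct (Hball' z0 Hz0) as [c [Kc' [Nc Lc]]].
      destruct (Hvs k) as [_ [_ Hbnd]].
      assert (Hin : inner_set K L N (vs k) (lam * t)).
      { exists (vadd (vscale lam x) (vscale (1 - lam) c)). split.
        { apply Kconv; auto; lra. }
        split.
        - eapply Rle_trans; [apply Nt|]. rewrite !Ns, !Rabs_right by lra. nra.
        - replace (vadd (vadd (vscale lam x) (vscale (1 - lam) c)) (vscale (lam * t) (vs k)))
            with (vadd (vscale lam (vadd x (vscale t l))) (vscale (1 - lam) (vadd c (vscale (-1) z0)))).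
          apply La; apply Ls; auto.
          apply vec_ext; intro; unfold z0, cc, vsub, vadd, vscale; field; lra. }
      pose proof (Hbnd _ Hin). pose proof (HK1 k Hk1). lra.
Qed.
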